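(* Let $0<\epsilon<1$, $r>0$ be constants, $p_2=\frac{1-\epsilon}{n}$, $p_3=\frac{r}{n\ln n}$, and $K_0=\max\{1,\tfrac{2(9+\epsilon)}{r}\}$. For every constant $c>0$ there is a constant $K_1(c)$ (depending also on $\epsilon,r$) such that for every vertex $v$ and every integer $T\le K_0\ln n$, the propagation process in $\mathbb{G}(n,p_2,p_3)$ started from $v$ satisfies $$\Pr\big[|\mathcal{Y}_T|+|\mathcal{D}_T|>K_1(c)\ln n\big]<n^{-c}$$ (for all sufficiently large $n$), where if the process has stopped before time $T$ the sets are frozen at their final values.
   Context: $\mathbb{G}(n,p_2,p_3)$ is the random hypergraph on a vertex set $V$ with $|V|=n$ in which each of the $\binom n2$ possible 2-element edges is present with probability $p_2$ and each of the $\binom n3$ possible 3-element hyperedges is present with probability $p_3$, all independently. Propagation process from a vertex $v$: one maintains a set $\mathcal{Y}_t$ of active vertices and a set $\mathcal{D}_t$ of inactive vertices, with $\mathcal{Y}_0=\{v\}$, $\mathcal{D}_0=\emptyset$; vertices in neither set are unexplored. At time $t=0,1,2,\dots$, while $\mathcal{Y}_t\neq\emptyset$, pick an active vertex $v_t\in\mathcal{Y}_t$ and let $U_t$ be the set of unexplored vertices $u$ such that $\{v_t,u\}$ is a 2-edge or $\{v_t,u,w\}$ is a 3-edge for some $w\in\mathcal{D}_t$; set $\mathcal{Y}_{t+1}=(\mathcal{Y}_t\cup U_t)\setminus\{v_t\}$ and $\mathcal{D}_{t+1}=\mathcal{D}_t\cup\{v_t\}$. The process stops at $T_v=\min\{t:\mathcal{Y}_t=\emptyset\}$,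 and the propagation component of $v$ is $C_v=\mathcal{D}_{T_v}$, so $|C_v|=T_v$. *)

(* Defs.v *)
From HB Require Import structures.
From mathcomp Require Import all_boot.
From Stdlib Require Import Reals.

Set Implicit Arguments. Unset Strict Implicit. Unset Printing Implicit Defensive.
Local Open Scope nat_scope.

Lemma Rplus_assoc' : associative Rplus.
Proof. by move=> x y z; rewrite Rplus_assoc. Qed.
Lemma Rmult_assoc' : associative Rmult.
Proof. by move=> x y z; rewrite Rmult_assoc. Qed.
HB.instance Definition _ := Monoid.isComLaw.Build R 0%R Rplus
  Rplus_assoc' Rplus_comm Rplus_0_l.
HB.instance Definition _ := Monoid.isComLaw.Build R 1%R Rmult
  Rmult_assoc' Rmult_comm Rmult_1_l.

(* A hypergraph on 'I_n: a set E2 of 2-edges and a set E3 of 3-edges. *)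
Definition hgraph (n : nat) : Type := ({set {set 'I_n}} * {set {set 'I_n}})%type.

Definition hg_weight (n : nat) (p2 p3 : R) (G : hgraph n) : R :=
  if [forall S : {set 'I_n}, (S \in G.1) ==> (#|S| == 2)%N] &&
     [forall S : {set 'I_n}, (S \in G.2) ==> (#|S| == 3)%N]
  then
    Rmult
      (\big[Rmult/1%R]_(S : {set 'I_n} | #|S| == 2)
          (if S \in G.1 then p2 else (1 - p2)%R))
      (\big[Rmult/1%R]_(S : {set 'I_n} | #|S| == 3)
          (if S \in G.2 then p3 else (1 - p3)%R))
  else 0%R.

Definition hg_prob (n : nat) (p2 p3 : R) (E : hgraph n -> bool) : R :=
  \big[Rplus/0%R]_(G : hgraph n | E G) hg_weight p2 p3 G.

(* One step of the propagation process; state = (Y_t, D_t).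
   [sel Y D] is the rule picking the active vertex v_t in Y. *)
Definition prop_step (n : nat) (G : hgraph n)
    (sel : {set 'I_n} -> {set 'I_n} -> 'I_n)
    (st : {set 'I_n} * {set 'I_n}) : {set 'I_n} * {set 'I_n} :=
  let: (Y, D) := st in
  if Y == set0 then (Y, D) else
  let vt := sel Y D in
  let U := [set u | (u \notin Y) && (u \notin D) &&
                    (([set vt; u] \in G.1) ||
                     [exists w in D, [set vt; u; w] \in G.2])] in
  ((Y :|: U) :\ vt, vt |: D).

Definition prop_state (n : nat) (G : hgraph n)
    (sel : {set 'I_n} -> {set 'I_n} -> 'I_n) (v : 'I_n) (T : nat) :=
  iter T (prop_step G sel) ([set v], set0).

Definition valid_sel (n : nat) (sel : {set 'I_n} -> {set 'I_n} -> 'I_n) : Prop :=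
  forall Y D : {set 'I_n}, Y != set0 -> sel Y D \in Y.

(* Main.v *)
Require Import Defs.
From HB Require Import structures.
From mathcomp Require Import all_boot.
From Stdlib Require Import Reals Lra Lia.
From mathcomp Require Import zify.

Set Implicit Arguments. Unset Strict Implicit. Unset Printing Implicit Defensive.


HB.instance Definition _ := Monoid.isMulLaw.Build R 0%R Rmult Rmult_0_l Rmult_0_r.
HB.instance Definition _ := Monoid.isAddLaw.Build R Rmult Rplus
  Rmult_plus_distr_r Rmult_plus_distr_l.

Section RBig.
Variable I : finType.

Lemma Rsum_le (P : pred I) (F G : I -> R) :
  (forall i, P i -> F i <= G i)%R ->
  (\big[Rplus/0%R]_(i | P i) F i <= \big[Rplus/0%R]_(i | P i) G i)%R.
Proof.
move=> H; elim/big_rec2: _ => [|i x y Pi Hxy]; first lra.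
by have := H i Pi; lra.
Qed.

Lemma Rsum_ge0 (P : pred I) (F : I -> R) :
  (forall i, P i -> 0 <= F i)%R -> (0 <= \big[Rplus/0%R]_(i | P i) F i)%R.
Proof.
move=> H; elim/big_rec: _ => [|i x Pi Hx]; first lra.
by have := H i Pi; lra.
Qed.

Lemma Rprod_ge0 (P : pred I) (F : I -> R) :
  (forall i, P i -> 0 <= F i)%R -> (0 <= \big[Rmult/1%R]_(i | P i) F i)%R.
Proof.
move=> H; elim/big_rec: _ => [|i x Pi Hx]; first lra.
by apply: Rmult_le_pos; auto.
Qed.

Lemma Rprod_le (P : pred I) (F G : I -> R) :
  (forall i, P i -> 0 <= F i <= G i)%R ->
  (\big[Rmult/1%R]_(i | P i) F i <= \big[Rmult/1%R]_(i | P i) G i)%R.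
Proof.
move=> H.
suff: (0 <= \big[Rmult/1%R]_(i | P i) F i <= \big[Rmult/1%R]_(i | P i) G i)%R by case.
elim/big_rec2: _ => [|i x y Pi [Hx Hxy]]; first lra.
have [H1 H2] := H i Pi; split; first by apply: Rmult_le_pos.
apply: Rmult_le_compat => //.
Qed.

Lemma Rsum_sub (P Q : pred I) (F : I -> R) :
  (forall i, P i -> Q i) -> (forall i, Q i -> 0 <= F i)%R ->
  (\big[Rplus/0%R]_(i | P i) F i <= \big[Rplus/0%R]_(i | Q i) F i)%R.
Proof.
move=> PQ H; rewrite (big_mkcond P) (big_mkcond Q).
apply: Rsum_le => i _; case: (boolP (P i)) => Pi; first by rewrite (PQ i Pi); lra.
by case: (boolP (Q i)) => Qi; [apply: H | lra].
Qed.

Lemma Rsum_const (P : pred I) (c : R) :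
  \big[Rplus/0%R]_(i | P i) c = (INR #|P| * c)%R.
Proof.
rewrite big_const; elim: #|P| => [|k IH]; first by simpl; lra.
rewrite iterS IH S_INR; lra.
Qed.

Lemma Rprod_const (P : pred I) (c : R) :
  \big[Rmult/1%R]_(i | P i) c = (c ^ #|P|)%R.
Proof.
by rewrite big_const; elim: #|P| => [|k IH] //=; rewrite IH.
Qed.
End RBig.

Section Wk.
Variable X : finType.
Variable K : pred X.
Variable p : R.

Definition wK (E : {set X}) : R :=
  if [forall S, (S \in E) ==> K S] then
    \big[Rmult/1%R]_(S | K S) (if S \in E then p else (1 - p)%R)
  else 0%R.

Lemma sum_wK (F : {set X}) : (forall x, x \in F -> K x) ->
  \big[Rplus/0%R]_(E : {set X} | F \subset E) wK E = (p ^ #|F|)%R.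
Proof.
move=> FK.
pose g x (b : bool) := if K x then (if b then p else (1 - p)%R) else 1%R.
pose Q x := if x \in F then pred1 true else if K x then predT else pred1 false.
have E1 : forall E : {set X}, F \subset E -> wK E =
   if [forall S, (S \in E) ==> K S] then \big[Rmult/1%R]_S g S (S \in E) else 0%R.
  move=> E _; rewrite /wK; case: ifP => // _.
  by rewrite (big_mkcond K).
rewrite (eq_bigr _ E1) => {E1}.
rewrite -big_mkcondr /=.
rewrite (reindex (fun f : {ffun X -> bool} => [set x | f x])); last first.
  exists (fun E : {set X} => [ffun x => x \in E]) => [f _|E _].
    by apply/ffunP => x; rewrite ffunE inE.
  by apply/setP => x; rewrite inE ffunE.
transitivity (\big[Rplus/0%R]_(f in finfun.family Q) \big[Rmult/1%R]_S g S (f S)).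
  apply: eq_big => [f|f _]; last by apply: eq_bigr => S _; rewrite inE.
  apply/andP/familyP => [[/subsetP H1 /forallP H2] x | H].
    rewrite /Q; case: ifP => [xF|xF]; first by have := H1 x xF; rewrite inE /= => ->.
    case: ifP => // Kx; have := H2 x; rewrite inE /= Kx implybF => /negbTE ->.
    by rewrite inE.
  split.
    apply/subsetP => x xF; have := H x; rewrite /Q xF inE /=.
    by move/eqP => ->.
  apply/forallP => x; rewrite inE; apply/implyP => fx.
  have := H x; rewrite /Q; case: ifP => [xF _|xF]; first by apply: FK.
  by case: ifP => // _; rewrite inE /= fx.
rewrite -bigA_distr_big_dep.
rewrite (eq_bigr (fun x => if x \in F then p else 1%R)); last first.
  move=> x _; rewrite /Q /g; case: ifP => xF.
    by rewrite (big_pred1 true) // FK.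
  case: ifP => Kx; last by rewrite (big_pred1 false).
  rewrite big_bool /=; lra.
by rewrite -big_mkcond Rprod_const.
Qed.
End Wk.

Lemma wK_ge0 (X : finType) (K : pred X) p (E : {set X}) :
  (0 <= p <= 1)%R -> (0 <= wK K p E)%R.
Proof.
move=> hp; rewrite /wK; case: ifP => _; last lra.
apply: Rprod_ge0 => S _; case: ifP => _; lra.
Qed.

Section HG.
Variable n : nat.
Variables p2 p3 : R.
Hypothesis hp2 : (0 <= p2 <= 1)%R.
Hypothesis hp3 : (0 <= p3 <= 1)%R.

Definition K2 := fun S : {set 'I_n} => #|S| == 2.
Definition K3 := fun S : {set 'I_n} => #|S| == 3.

Lemma hg_weight_split (G : hgraph n) :
  hg_weight p2 p3 G = (wK K2 p2 G.1 * wK K3 p3 G.2)%R.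
Proof.
rewrite /hg_weight /wK /K2 /K3; case: [forall S, _ ==> _]; case: [forall S, _ ==> _] => /=; try lra; reflexivity.
Qed.

Lemma hg_weight_ge0 (G : hgraph n) : (0 <= hg_weight p2 p3 G)%R.
Proof. by rewrite hg_weight_split; apply: Rmult_le_pos; apply: wK_ge0. Qed.

Lemma hg_prob_split (E1 E2 : pred {set {set 'I_n}}) :
  hg_prob p2 p3 (fun G => E1 G.1 && E2 G.2) =
  (\big[Rplus/0%R]_(A | E1 A) wK K2 p2 A * \big[Rplus/0%R]_(B | E2 B) wK K3 p3 B)%R.
Proof.
rewrite /hg_prob (eq_bigr (fun G => wK K2 p2 G.1 * wK K3 p3 G.2)%R); last first.
  by move=> G _; apply: hg_weight_split.
rewrite -(pair_big_dep E1 (fun _ => E2) (fun a b => wK K2 p2 a * wK K3 p3 b)%R).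
rewrite big_distrl /=; apply: eq_bigr => A _.
by rewrite big_distrr.
Qed.

Lemma hg_prob_ext (E F : hgraph n -> bool) : (forall G, E G = F G) ->
  hg_prob p2 p3 E = hg_prob p2 p3 F.
Proof. by move=> H; apply: eq_bigl => G; apply: H. Qed.

Lemma hg_prob_mono (E F : hgraph n -> bool) : (forall G, E G -> F G) ->
  (hg_prob p2 p3 E <= hg_prob p2 p3 F)%R.
Proof. by move=> H; apply: Rsum_sub => // G _; apply: hg_weight_ge0. Qed.

Lemma union_bound (I : finType) (P : pred I) (E : I -> hgraph n -> bool) :
  (hg_prob p2 p3 (fun G => [exists i, P i && E i G]) <=
   \big[Rplus/0%R]_(i | P i) hg_prob p2 p3 (E i))%R.
Proof.
rewrite /hg_prob.
apply: Rle_trans (_ : _ <= \big[Rplus/0%R]_G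
   \big[Rplus/0%R]_(i | P i && E i G) hg_weight p2 p3 G)%R _; last first.
  rewrite (exchange_big_dep P) /=; last by move=> ? ? _ /andP[]. apply Req_le.
  by apply: eq_bigr => i Pi; apply: eq_bigl => G; rewrite Pi.
apply: Rle_trans (_ : _ <= \big[Rplus/0%R]_(G | [exists i, P i && E i G])
   \big[Rplus/0%R]_(i | P i && E i G) hg_weight p2 p3 G)%R _.
  apply: Rsum_le => G /existsP [i Hi].
  rewrite (bigD1 i) //=.
  have := @Rsum_ge0 _ (fun j => (P j && E j G) && (j != i))
     (fun _ => hg_weight p2 p3 G) (fun _ _ => hg_weight_ge0 G).
  lra.
by apply: Rsum_sub => // G _; apply: Rsum_ge0 => i _; apply: hg_weight_ge0.
Qed.

Lemma hg_prob_false (E : hgraph n -> bool) : (forall G, ~~ E G) -> hg_prob p2 p3 E = 0%R.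
Proof. by move=> H; rewrite /hg_prob big_pred0 // => G; apply/negbTE. Qed.

Lemma hg_prob_condl (b : bool) (E : hgraph n -> bool) :
  hg_prob p2 p3 (fun G => b && E G) = if b then hg_prob p2 p3 E else 0%R.
Proof. by case: b => //; apply: hg_prob_false. Qed.

Definition present (G : hgraph n) (X : {set 'I_n}) :=
  ((#|X| == 2) && (X \in G.1)) || ((#|X| == 3) && (X \in G.2)).
Definition pe (X : {set 'I_n}) := if #|X| == 2 then p2 else p3.

Lemma prob_present (F : {set {set 'I_n}}) :
  (forall X, X \in F -> (#|X| == 2) || (#|X| == 3)) ->
  hg_prob p2 p3 (fun G => [forall X in F, present G X]) =
  \big[Rmult/1%R]_(X in F) pe X.
Proof.
move=> HF.
pose F2 := [set X in F | #|X| == 2]; pose F3 := [set X in F | #|X| == 3].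
rewrite (hg_prob_ext (F := fun G => (F2 \subset G.1) && (F3 \subset G.2))); last first.
  move=> G; apply/forallP/andP => [H|[/subsetP H1 /subsetP H2] X].
    split; apply/subsetP => X; rewrite inE => /andP [XF cX];
      have := H X; rewrite XF /present /= (eqP cX) //=.
    by rewrite orbF.
  apply/implyP => XF; rewrite /present.
  case/orP: (HF X XF) => cX; rewrite cX /=.
    by rewrite H1 // inE XF cX.
  by rewrite H2 ?orbT // inE XF cX.
rewrite (hg_prob_split (fun A => F2 \subset A) (fun B => F3 \subset B)) sum_wK; last by move=> X; rewrite inE => /andP [].
rewrite sum_wK; last by move=> X; rewrite inE => /andP [].
rewrite [RHS](bigID (fun X : {set 'I_n} => #|X| == 2)) /=.
rewrite (eq_bigr (fun _ => p2)); last by move=> X /andP [_ c]; rewrite /pe c.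
rewrite [X in (_ = _ * X)%R](eq_bigr (fun _ => p3)); last first.
  by move=> X /andP [XF c2]; rewrite /pe (negbTE c2).
rewrite !Rprod_const; congr (_ ^ _ * _ ^ _)%R; apply: eq_card => X; rewrite !inE //.
apply/andP/andP => [[XF c3]|[XF c2]]; split => //; first by rewrite (eqP c3).
by case/orP: (HF X XF) => //; rewrite (negbTE c2).
Qed.
End HG.

Lemma card3 (T : finType) (a b c : T) : a != b -> a != c -> b != c ->
  #|[set a; b; c]| = 3.
Proof.
move=> ab ac bc.
rewrite setUC -/(c |: [set a; b]) cardsU1 cards2 ab.
have -> : c \in [set a; b] = false.
  by rewrite !inE (eq_sym c a) (eq_sym c b) (negbTE ac) (negbTE bc).
by [].
Qed.

Section Proc.
Variable n : nat.
Variable G : hgraph n.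
Variable sel : {set 'I_n} -> {set 'I_n} -> 'I_n.
Hypothesis Hsel : valid_sel sel.
Variable v : 'I_n.

Definition Inv (t : nat) (st : {set 'I_n} * {set 'I_n}) : Prop :=
  let: (Y, D) := st in
  [/\ Y :&: D = set0, v \in Y :|: D, #|D| <= t &
   exists rank : 'I_n -> nat, exists e : 'I_n -> {set 'I_n},
     forall x, x \in Y :|: D -> rank x <= t /\
       (x != v -> [/\ present G (e x), x \in e x, e x :\ x \subset D &
                      forall y, y \in e x :\ x -> rank y < rank x])].

Lemma Inv0 : Inv 0 ([set v], set0).
Proof.
split; first by rewrite setI0.
- by rewrite !inE eqxx.
- by rewrite cards0.
exists (fun _ => 0), (fun _ => set0) => x; rewrite !inE orbF => /eqP ->.
by rewrite eqxx.
Qed.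

Lemma Inv_step t st : Inv t st -> Inv t.+1 (prop_step G sel st).
Proof.
case: st => Y D [YD vS cD [rank [e He]]].
rewrite /prop_step.
case: eqP => [Y0|/eqP Y0].
  split => //; first exact: leqW.
  exists rank, e => x /He [r1 r2]; split => //; exact: leqW.
set vt := sel Y D.
have vtY : vt \in Y := Hsel D Y0.
set U := [set u | _].
have nYD x : x \in Y -> x \in D -> False.
  by move=> xY xD; have := in_set0 x; rewrite -YD inE xY xD.
have UP x : x \in U -> [/\ x \notin Y, x \notin D &
    ([set vt; x] \in G.1) || [exists w in D, [set vt; x; w] \in G.2]].
  by rewrite inE => /andP [/andP [-> ->] ->].
clearbody U.
have Smem (x : 'I_n) : x \in ((Y :|: U) :\ vt) :|: (vt |: D) -> (x \in Y :|: D) || (x \in U).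
  rewrite !inE.
  by move=> /orP [/andP [_ /orP [->|->]]|/orP [/eqP ->|->]]; rewrite ?vtY ?orbT.
split.
- apply/setP => x; rewrite !inE; apply/negbTE.
  apply/negP => /andP [/andP [xvt /orP [xY|xU]] /orP [/eqP xe|xD]].
  + by rewrite xe eqxx in xvt.
  + exact: nYD xY xD.
  + by rewrite xe eqxx in xvt.
  + by case: (UP x xU) => _ /negP [].
- move: vS; rewrite !inE => /orP [vY|->]; last by rewrite !orbT.
  by case: (v =P vt) => [->|/eqP nv]; rewrite ?eqxx ?orbT // ?(negbTE nv) vY.
- by rewrite cardsU1 addnC -addn1 leq_add // leq_b1.
pose e' x := if x \in Y :|: D then e x else
   if [set vt; x] \in G.1 then [set vt; x]
   else [set vt; x; odflt x [pick w in D | [set vt; x; w] \in G.2]].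
exists (fun x => if x \in Y :|: D then rank x else t.+1), e'.
have vtS : vt \in Y :|: D by rewrite inE vtY.
have DS y : y \in D -> y \in Y :|: D by move=> yD; rewrite inE yD orbT.
move=> x /Smem /orP [xS|xU].
  rewrite xS /e' xS; have [r1 r2] := He x xS; split; first exact: leqW.
  move=> /r2 [p1 p2 p3 p4]; split => //.
    by apply: subset_trans p3 (subsetU1 _ _).
  move=> y yx; have := p4 y yx; have yD := subsetP p3 y yx.
  by rewrite (DS y yD).
have xS : x \notin Y :|: D.
  by case: (UP x xU) => xY xD _; rewrite inE negb_or xY xD.
have xv : x != v by apply: contraNneq xS => ->.
rewrite (negbTE xS); split => // _.
have vtx : vt != x by apply: contraTneq vtY => ->; case: (UP x xU).
rewrite /e' (negbTE xS).
case: ifP => [E1|E1].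
  split.
  - by rewrite /present cards2 vtx E1.
  - by rewrite !inE eqxx orbT.
  - apply/subsetP => y; rewrite !inE => /andP [yx /orP [/eqP ->|/eqP yx']].
      by rewrite eqxx.
    by rewrite yx' eqxx in yx.
  - move=> y; rewrite !inE => /andP [yx /orP [/eqP ->|/eqP yx']].
      by rewrite vtY /= ltnS; exact: (He vt vtS).1.
    by rewrite yx' eqxx in yx.
case: (UP x xU) => xY xD; rewrite E1 /= => Ex.
case: pickP => [w /andP [wD Hw]|H]; last first.
  by case/existsP: Ex => w /andP [wD Hw]; have := H w; rewrite wD Hw.
have vtw : vt != w by apply: contraTneq vtY => ->; apply/negP => wY; exact: nYD wY wD.
have xw : x != w by apply: contraNneq xD => ->.
split.
- by rewrite /present card3 // Hw orbT.
- by rewrite !inE eqxx !orbT.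
- apply/subsetP => y; rewrite !inE => /andP [yx /orP [/orP [/eqP ->|/eqP yx']|/eqP ->]].
  + by rewrite eqxx.
  + by rewrite yx' eqxx in yx.
  + by rewrite wD orbT.
- move=> y; rewrite !inE => /andP [yx /orP [/orP [/eqP ->|/eqP yx']|/eqP ->]].
  + by rewrite vtY /= ltnS; exact: (He vt vtS).1.
  + by rewrite yx' eqxx in yx.
  + by rewrite wD orbT /= ltnS; exact: (He w (DS w wD)).1.
Qed.

Lemma Inv_state T : Inv T (prop_state G sel v T).
Proof.
elim: T => [|T IH]; first exact: Inv0.
by rewrite /prop_state iterS; apply: Inv_step.
Qed.
End Proc.

Lemma interm (T : finType) (B C : {set T}) m :
  B \subset C -> #|B| <= m -> m <= #|C| ->
  exists A : {set T}, [/\ B \subset A, A \subset C & #|A| = m].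
Proof.
move=> BC h1 h2.
have [k Em] : exists k, m = #|B| + k by exists (m - #|B|); lia.
subst m; clear h1.
move: h2; elim: k => [|k IH] h2; first by exists B; rewrite addn0.
have h3 : #|B| + k <= #|C| by rewrite addnS in h2; exact: ltnW h2.
have [A [BA AC cA]] := IH h3.
case: (pickP [pred x in C :\: A]) => [x /= xCA|H].
  move: xCA; rewrite inE => /andP [xA xC].
  exists (x |: A); split.
  - exact: subset_trans BA (subsetU1 _ _).
  - apply/subsetP => y; rewrite in_setU1 => /orP [/eqP yx|yA]; first by rewrite yx.
    exact: (subsetP AC).
  - by rewrite cardsU1 xA cA addnS.
have : C \subset A.
  apply/subsetP => y yC; apply/negPn/negP => yA; have := H y.
  by rewrite /= inE yA yC.
move/subset_leq_card; rewrite cA; rewrite addnS in h2; lia.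
Qed.

Definition fam n (D : {set 'I_n}) (u : 'I_n) : pred {set 'I_n} :=
  fun X => (u \in X) && (X \subset u |: D) && ((#|X| == 2) || (#|X| == 3)).

Lemma witness n (G : hgraph n) (v : 'I_n) T (Y D : {set 'I_n}) m :
  Inv G v T (Y, D) -> T <= m -> m < #|Y| + #|D| ->
  exists A : {set 'I_n}, exists D' : {set 'I_n}, exists e : {ffun 'I_n -> {set 'I_n}},
  [&& #|A| == m, D' \subset v |: A, #|D'| <= T,
      e \in pfamily set0 [pred u | u \in A] (fam D'),
      [forall u in A, forall u' in A, (e u == e u') ==> (u == u')] &
      [forall u in A, present G (e u)]].
Proof.
move=> [YD vS cD [rank [ef He]]] Tm mS.
set S := Y :|: D.
have cS : #|S| = #|Y| + #|D| by rewrite cardsU YD cards0 subn0.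
have [A [BA AC cA]] : exists A : {set 'I_n},
    [/\ D :\ v \subset A, A \subset S :\ v & #|A| = m].
  apply: interm.
  - by apply: setSD; rewrite subsetUr.
  - apply: leq_trans (subset_leq_card (subD1set D v)) _; exact: leq_trans cD Tm.
  - have E := cardsD1 v S; rewrite vS cS in E.
    by rewrite -ltnS; apply: (leq_trans mS); rewrite E.
have AS u : u \in A -> u \in S /\ u != v.
  by move/(subsetP AC); rewrite !inE => /andP [-> ->].
exists A, D, [ffun u => if u \in A then ef u else set0].
apply/and5P; split.
- by rewrite cA.
- apply/subsetP => x xD; rewrite !inE; case: (boolP (x == v)) => //= xv.
  by apply: (subsetP BA); rewrite !inE xv xD.
- exact: cD.
- apply/pfamilyP; split.
    by apply/subsetP => x; rewrite !inE ffunE; case: (x \in A) => //; rewrite eqxx.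
  move=> u uA; rewrite ffunE uA /fam.
  have [uS uv] := AS u uA; have [_ /(_ uv) [p1 p2 p3 _]] := He u uS.
  rewrite unfold_in /= p2 /=; apply/andP; split.
    apply/subsetP => y yin; rewrite !inE; case: (boolP (y == u)) => //= yu.
    by apply: (subsetP p3); rewrite !inE yu yin.
  by move: p1; rewrite /present => /orP [/andP [-> _]|/andP [-> _]]; rewrite ?orbT.
- apply/andP; split.
    apply/forallP => u; apply/implyP => uA; apply/forallP => u'; apply/implyP => u'A.
    rewrite !ffunE uA u'A; apply/implyP => /eqP E.
    case: (boolP (u == u')) => // uu'.
    have [uS uv] := AS u uA; have [_ /(_ uv) [_ q2 _ q4]] := He u uS.
    have [u'S u'v] := AS u' u'A; have [_ /(_ u'v) [_ r2 _ r4]] := He u' u'S.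
    have h1 := q4 u'; have h2 := r4 u.
    rewrite E in h1; rewrite -E in h2.
    have i1 : u' \in ef u' :\ u by rewrite !inE r2 eq_sym uu'.
    have i2 : u \in ef u :\ u' by rewrite !inE q2 uu'.
    have := h1 i1; have := h2 i2.
    by move=> a b; have := ltn_trans a b; rewrite ltnn.
  apply/forallP => u; apply/implyP => uA; rewrite ffunE uA.
  have [uS uv] := AS u uA; by have [_ /(_ uv) []] := He u uS.
Qed.

Section Bound.
Variable n : nat.
Variables p2 p3 : R.
Hypothesis hp2 : (0 <= p2 <= 1)%R.
Hypothesis hp3 : (0 <= p3 <= 1)%R.

Lemma fam2_card (D : {set 'I_n}) u :
  #|[pred X | fam D u X && (#|X| == 2)]| <= #|D|.
Proof.
apply: leq_trans (_ : #|[set [set u; x] | x in D]| <= _); last exact: leq_imset_card.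
apply: subset_leq_card; apply/subsetP => X; rewrite inE /fam /=.
case/andP => /andP [/andP [uX XD] _] c2.
have c1 : #|X :\ u| == 1 by move: c2; rewrite (cardsD1 u X) uX.
case/cards1P: c1 => x Ex.
have xX : x \in X :\ u by rewrite Ex set11.
apply/imsetP; exists x.
  move: xX; rewrite !inE => /andP [xu xX]; have := subsetP XD x xX.
  by rewrite !inE (negbTE xu).
by rewrite -(setD1K uX) Ex.
Qed.

Lemma fam3_card (D : {set 'I_n}) u :
  #|[pred X | fam D u X && (#|X| != 2)]| <= #|D| * #|D|.
Proof.
apply: leq_trans (_ : #|[set [set u; p.1; p.2] | p in setX D D]| <= _); last first.
  by rewrite -cardsX; exact: leq_imset_card.
apply: subset_leq_card; apply/subsetP => X; rewrite inE /fam /=.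
case/andP => /andP [/andP [uX XD] /orP [c|c3]] c2; first by rewrite c in c2.
have c1 : #|X :\ u| == 2 by move: c3; rewrite (cardsD1 u X) uX.
case/cards2P: c1 => a [b [ab Ex]].
have inD y : y \in X :\ u -> y \in D.
  rewrite !inE => /andP [yu yX]; have := subsetP XD y yX.
  by rewrite !inE (negbTE yu).
apply/imsetP; exists (a, b).
  by rewrite inE /= !inD // Ex !inE eqxx ?orbT.
by rewrite /= -(setD1K uX) Ex setUA.
Qed.

Lemma fam_sum (D : {set 'I_n}) u :
  (\big[Rplus/0%R]_(X | fam D u X) pe p2 p3 X <=
   INR #|D| * p2 + INR #|D| * INR #|D| * p3)%R.
Proof.
rewrite (bigID (fun X : {set 'I_n} => #|X| == 2)) /=.
rewrite [X in (X + _ <= _)%R](eq_bigr (fun _ => p2)); last by move=> X /andP [_ c]; rewrite /pe c.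
rewrite [X in (_ + X <= _)%R](eq_bigr (fun _ => p3)); last first.
  by move=> X /andP [_ c2]; rewrite /pe (negbTE c2).
rewrite !Rsum_const.
have h2 := le_INR _ _ (leP (fam2_card D u)).
have h3 := le_INR _ _ (leP (fam3_card D u)); rewrite mult_INR in h3.
apply: Rplus_le_compat; apply: Rmult_le_compat_r; try lra.
  by apply: Rle_trans h2; apply: Req_le; congr (INR _); apply: eq_card.
by apply: Rle_trans h3; apply: Req_le; congr (INR _); apply: eq_card.
Qed.

Lemma pe_ge0 (X : {set 'I_n}) : (0 <= pe p2 p3 X)%R.
Proof. by rewrite /pe; case: ifP; lra. Qed.

Lemma prob_e (A D : {set 'I_n}) (e : {ffun 'I_n -> {set 'I_n}}) :
  e \in pfamily set0 [pred u | u \in A] (fam D) ->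
  [forall u in A, forall u' in A, (e u == e u') ==> (u == u')] ->
  hg_prob p2 p3 (fun G => [forall u in A, present G (e u)]) =
  \big[Rmult/1%R]_(u in A) pe p2 p3 (e u).
Proof.
move=> /pfamilyP [_ Hf] /forallP Hinj.
have inj : {in A &, injective e}.
  move=> u u' uA u'A E; have := Hinj u; rewrite uA /= => /forallP /(_ u').
  by rewrite u'A E eqxx /= => /eqP.
rewrite -(big_imset _ inj).
rewrite -prob_present //; last first.
  move=> X /imsetP [u uA ->]; have := Hf u uA; rewrite unfold_in /fam.
  by case/andP.
apply: hg_prob_ext => G; apply/forallP/forallP => H X.
  apply/implyP => /imsetP [u uA ->]; have := H u; by rewrite uA.
apply/implyP => uA; have := H (e X); by rewrite imset_f.
Qed.

Variable T : nat.
Definition q := (INR T * p2 + INR T * INR T * p3)%R.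

Lemma q_ge0 : (0 <= q)%R.
Proof.
rewrite /q; have := pos_INR T => h.
apply: Rplus_le_le_0_compat; [apply: Rmult_le_pos|apply: Rmult_le_pos; [apply: Rmult_le_pos|]]; lra.
Qed.

Lemma sum_e (A D : {set 'I_n}) : #|D| <= T ->
  (\big[Rplus/0%R]_(e : {ffun 'I_n -> {set 'I_n}} |
      (e \in pfamily set0 [pred u | u \in A] (fam D)) &&
      [forall u in A, forall u' in A, (e u == e u') ==> (u == u')])
    hg_prob p2 p3 (fun G => [forall u in A, present G (e u)]) <= q ^ #|A|)%R.
Proof.
move=> cD.
rewrite (eq_bigr (fun e : {ffun 'I_n -> {set 'I_n}} => \big[Rmult/1%R]_(u | [pred u | u \in A] u) pe p2 p3 (e u)));
  last by move=> e /andP [h1 h2]; rewrite (prob_e h1 h2).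
apply: Rle_trans (Rsum_sub (Q := fun e => e \in pfamily set0 [pred u | u \in A] (fam D)) _ _) _.
- by move=> e /andP [].
- by move=> e _; apply: Rprod_ge0 => u _; apply: pe_ge0.
rewrite -(big_distr_big_dep set0 [pred u | u \in A] (fam D) (fun _ X => pe p2 p3 X)).
apply: Rle_trans (_ : _ <= \big[Rmult/1%R]_(u | [pred u | u \in A] u) q)%R _.
  apply: Rprod_le => u _; split; first by apply: Rsum_ge0 => X _; apply: pe_ge0.
  apply: Rle_trans (fam_sum D u) _.
  have h := le_INR _ _ (leP cD); have := pos_INR #|D| => h0.
  rewrite /q; apply: Rplus_le_compat.
    by apply: Rmult_le_compat_r; lra.
  apply: Rmult_le_compat_r; first lra.
  by apply: Rmult_le_compat.
rewrite Rprod_const; apply: Req_le; congr (q ^ _)%R; apply: eq_card => u.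
Qed.
End Bound.

Section Main.
Variable n : nat.
Variables p2 p3 : R.
Hypothesis hp2 : (0 <= p2 <= 1)%R.
Hypothesis hp3 : (0 <= p3 <= 1)%R.

Lemma INR_exp2 k : INR (expn 2 k) = (2 ^ k)%R.
Proof.
elim: k => [|k IH]; first by rewrite expn0.
by rewrite expnS mult_INR IH /=.
Qed.

Lemma sum_D (v : 'I_n) (T : nat) (A : {set 'I_n}) :
  (\big[Rplus/0%R]_(D : {set 'I_n} | (D \subset v |: A) && (leq #|D| T)) (q p2 p3 T ^ #|A|) <=
   2 ^ (#|A|.+1) * q p2 p3 T ^ #|A|)%R.
Proof.
have hq := q_ge0 hp2 hp3 T.
apply: Rle_trans (Rsum_sub (Q := fun D => D \in powerset (v |: A)) _ _) _.
- by move=> D /andP [h _]; rewrite powersetE.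
- by move=> D _; apply: pow_le.
rewrite Rsum_const; apply: Rmult_le_compat_r; first exact: pow_le.
have -> : #|(fun D => D \in powerset (v |: A))| = #|powerset (v |: A)| by apply: eq_card.
rewrite card_powerset INR_exp2; apply: Rle_pow; first (simpl; lra).
by rewrite cardsU1; apply/leP; case: (v \in A) => /=.
Qed.

Lemma main_bound sel (Hsel : valid_sel sel) (v : 'I_n) (T m : nat) : T <= m ->
  (hg_prob p2 p3 (fun G => leq m.+1 (#|(prop_state G sel v T).1| + #|(prop_state G sel v T).2|))
   <= INR 'C(n, m) * (2 ^ m.+1 * q p2 p3 T ^ m))%R.
Proof.
move=> Tm.
apply: Rle_trans (hg_prob_mono hp2 hp3 (F := fun G => [exists A : {set 'I_n},
   (#|A| == m) && [exists D : {set 'I_n}, ((D \subset v |: A) && (#|D| <= T)) &&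
   [exists e : {ffun 'I_n -> {set 'I_n}},
      ((e \in pfamily set0 [pred u | u \in A] (fam D)) &&
      [forall u in A, forall u' in A, (e u == e u') ==> (u == u')]) &&
      [forall u in A, present G (e u)]]]]) _) _.
  move=> G; have := Inv_state G Hsel v T.
  case: (prop_state G sel v T) => Y D /= HI mS.
  have [A [D' [e /and5P [h1 h2 h3 h4 /andP [h5 h6]]]]] := witness HI Tm mS.
  apply/existsP; exists A; rewrite h1 /=; apply/existsP; exists D'; rewrite h2 h3 /=.
  by apply/existsP; exists e; rewrite h4 h5 h6.
apply: Rle_trans (union_bound hp2 hp3 _ _) _.
apply: Rle_trans (_ : _ <= \big[Rplus/0%R]_(A : {set 'I_n} | #|A| == m)
    (2 ^ m.+1 * q p2 p3 T ^ m))%R _; last first.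
  rewrite Rsum_const; apply: Req_le; congr (INR _ * _)%R.
  have := card_draws 'I_n m; rewrite card_ord => <-; apply: eq_card => A; by rewrite inE.
apply: Rsum_le => A /eqP cA.
apply: Rle_trans (union_bound hp2 hp3 _ _) _.
rewrite -cA; apply: Rle_trans (sum_D v T A).
apply: Rsum_le => D /andP [_ cD].
apply: Rle_trans (union_bound hp2 hp3 _ _) _.
exact: sum_e.
Qed.
End Main.

Lemma INR_muln a b : INR (a * b) = (INR a * INR b)%R.
Proof. exact: mult_INR. Qed.

Lemma INR_expn a k : INR (expn a k) = (INR a ^ k)%R.
Proof.
elim: k => [|k IH]; first by rewrite expn0.
by rewrite expnS INR_muln IH /=.
Qed.

Lemma expn_mono a b k : a <= b -> expn a k <= expn b k.
Proof. by move=> ab; elim: k => // k IH; rewrite !expnS leq_mul. Qed.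

Lemma ffact_le_exp m n : n ^_ m <= expn n m.
Proof.
elim: m n => [|m IH] n; first by rewrite ffactn0 expn0.
rewrite ffactnS expnS leq_mul //.
exact: leq_trans (IH _) (expn_mono _ (leq_pred n)).
Qed.

Lemma binom_le n m : (INR 'C(n, m) * INR (m`!) <= INR n ^ m)%R.
Proof.
rewrite -INR_muln bin_ffact -INR_expn; apply: le_INR; apply/leP; exact: ffact_le_exp.
Qed.

Lemma exp_pow x m : (exp x ^ m)%R = exp (INR m * x).
Proof.
elim: m => [|m IH]; first by rewrite /= Rmult_0_l exp_0.
rewrite S_INR /= IH -exp_plus; congr exp; ring.
Qed.

Lemma succ_pow_le m : (INR m.+1 ^ m <= exp 1 * INR m ^ m)%R.
Proof.
case: m => [|m]; first by rewrite /=; have := exp_ineq1_le 1; lra.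
set M := INR m.+1.
have M0 : (0 < M)%R by apply: lt_0_INR; apply/ltP.
have h : (INR m.+2 <= M * exp (/ M))%R.
  have := exp_ineq1_le (/ M).
  have -> : INR m.+2 = (M + 1)%R by rewrite /M (S_INR m.+1).
  move=> h; apply: Rle_trans (_ : _ <= M * (1 + / M))%R _.
    by apply: Req_le; field; lra.
  by apply: Rmult_le_compat_l; lra.
apply: Rle_trans (pow_incr _ _ m.+1 _) _.
  by split; [apply: pos_INR|exact: h].
rewrite Rpow_mult_distr exp_pow Rmult_comm; apply: Req_le; congr (_ * _)%R.
by congr exp; rewrite -/M; field; lra.
Qed.

Lemma mm_fact m : (INR m ^ m <= exp (INR m) * INR (m`!))%R.
Proof.
elim: m => [|m IH]; first by rewrite /= exp_0; lra.
rewrite factS INR_muln.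
have -> : (INR m.+1 ^ m.+1 = INR m.+1 * INR m.+1 ^ m)%R by [].
have -> : exp (INR m.+1) = (exp 1 * exp (INR m))%R.
  by rewrite -exp_plus S_INR Rplus_comm.
have hm := pos_INR m.+1.
apply: Rle_trans (Rmult_le_compat_l _ _ _ hm (succ_pow_le m)) _.
have he : (0 <= exp 1)%R by apply: Rlt_le; apply: exp_pos.
have := Rmult_le_compat_l _ _ _ he IH.
move=> h; apply: Rle_trans (Rmult_le_compat_l _ _ _ hm h) _.
apply: Req_le; ring.
Qed.

Lemma final_num (x L al be c C Q : R) (m : nat) :
 (0 < x)%R -> (1 <= L)%R -> (0 <= al)%R -> (0 < c)%R ->
 (2 * exp 1 * exp 1 * al <= be)%R -> (c + 1 <= be)%R ->
 (be * L < INR m)%R ->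
 (0 <= Q <= al * L / x)%R ->
 (0 <= C)%R -> (C * INR (m`!) <= x ^ m)%R ->
 (C * (2 ^ m.+1 * Q ^ m) < exp (- (c * L)))%R.
Proof.
move=> x0 L1 al0 c0 hbe1 hbe2 hM [Q0 QL] C0 hC.
set M := INR m.
have e2 : (2 < exp 1)%R by have := exp_ineq1 1; lra.
have bL : (0 < be * L)%R by apply: Rmult_lt_0_compat; lra.
have M0 : (0 < M)%R by rewrite /M; lra.
have F0 : (0 < INR (m`!))%R by apply: lt_0_INR; apply/ltP; exact: fact_gt0.
set y := (2 * al * L)%R.
have y0 : (0 <= y)%R by rewrite /y; nra.
have hA : (2 ^ m.+1 * Q ^ m <= 2 * (y / x) ^ m)%R.
  have -> : (2 ^ m.+1 * Q ^ m = 2 * (2 * Q) ^ m)%R by rewrite Rpow_mult_distr /=; ring.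
  apply: Rmult_le_compat_l; first lra.
  apply: pow_incr; split; first lra.
  have -> : (y / x = 2 * (al * L / x))%R by rewrite /y; field; lra.
  lra.
have hB : (C * (y / x) ^ m <= y ^ m / INR (m`!))%R.
  have -> : ((y / x) ^ m = y ^ m / x ^ m)%R.
    by rewrite /Rdiv Rpow_mult_distr pow_inv.
  have xm : (0 < x ^ m)%R by apply: pow_lt.
  have ym : (0 <= y ^ m)%R by apply: pow_le.
  have hC' : (C <= x ^ m / INR (m`!))%R.
    by apply: (Rmult_le_reg_r (INR (m`!))) => //; rewrite /Rdiv Rmult_assoc Rinv_l; lra.
  apply: Rle_trans (_ : _ <= x ^ m / INR (m`!) * (y ^ m / x ^ m))%R _.
    apply: Rmult_le_compat_r => //; apply: Rmult_le_pos => //.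
    by apply: Rlt_le; apply: Rinv_0_lt_compat.
  by apply: Req_le; field; lra.
have hCC : (y ^ m / INR (m`!) <= (y * exp 1 / M) ^ m)%R.
  have hmm := mm_fact m; rewrite -/M in hmm.
  have -> : ((y * exp 1 / M) ^ m = (y / M) ^ m * exp M)%R.
    rewrite /Rdiv !Rpow_mult_distr exp_pow /M Rmult_1_r; ring.
  have -> : (y ^ m = (y / M) ^ m * M ^ m)%R.
    by rewrite -Rpow_mult_distr; congr (_ ^ _)%R; field; lra.
  have yM : (0 <= (y / M) ^ m)%R.
    by apply: pow_le; apply: Rmult_le_pos => //; apply: Rlt_le; apply: Rinv_0_lt_compat.
  rewrite /Rdiv Rmult_assoc; apply: Rmult_le_compat_l => //.
  apply: (Rmult_le_reg_r (INR (m`!))) => //.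
  by rewrite Rmult_assoc Rinv_l; lra.
have hD : ((y * exp 1 / M) ^ m <= exp (- M))%R.
  have -> : exp (- M) = ((/ exp 1) ^ m)%R.
    by rewrite pow_inv exp_pow Rmult_1_r exp_Ropp.
  apply: pow_incr; split.
    apply: Rmult_le_pos; first by apply: Rmult_le_pos => //; lra.
    by apply: Rlt_le; apply: Rinv_0_lt_compat.
  apply: (Rmult_le_reg_r (M * exp 1)); first nra.
  have -> : (y * exp 1 / M * (M * exp 1) = y * exp 1 * exp 1)%R by field; lra.
  have -> : (/ exp 1 * (M * exp 1) = M)%R by field; lra.
  have := Rmult_le_compat_r L _ _ ltac:(lra) hbe1; rewrite /y => h.
  replace (2 * al * L * exp 1 * exp 1)%R with (2 * exp 1 * exp 1 * al * L)%R by ring.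
  by apply: Rle_trans h _; apply: Rlt_le.
have hF : (2 * exp (- M) < exp (- (c * L)))%R.
  have h1 : (exp (- M) < exp (- (c * L)) * exp (- L))%R.
    rewrite -exp_plus; apply: exp_increasing.
    have := Rmult_le_compat_r L _ _ ltac:(lra) hbe2 => h.
    have : (be * L < M)%R by []. move=> h3.
    replace ((c + 1) * L)%R with (c * L + L)%R in h by ring; lra.
  have h2 : (2 * exp (- L) <= 1)%R.
    rewrite exp_Ropp; have hL : (exp 1 <= exp L)%R.
      by case: (Req_dec L 1) => [->|h]; [lra|apply: Rlt_le; apply: exp_increasing; lra].
    have := exp_pos L => hp.
    apply: (Rmult_le_reg_r (exp L)) => //; rewrite Rmult_assoc Rinv_l; lra.
  have := exp_pos (- (c * L)); have := exp_pos (- L); nra.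
have hA' := Rmult_le_compat_l _ _ _ C0 hA.
apply: Rle_lt_trans hA' _.
have -> : (C * (2 * (y / x) ^ m) = 2 * (C * (y / x) ^ m))%R by ring.
lra.
Qed.

Lemma nat_approx (z : R) : (0 <= z)%R -> exists m : nat, (z < INR m <= z + 1)%R.
Proof.
move=> z0; have [h1 h2] := archimed z.
have hz : (0 <= up z)%Z by apply: le_IZR; lra.
exists (Z.to_nat (up z)); rewrite INR_IZR_INZ Znat.Z2Nat.id //; lra.
Qed.

Unset Implicit Arguments. Set Strict Implicit.

Theorem proposition2 (eps r : R) :
  (0 < eps < 1)%R -> (0 < r)%R ->
  let K0 := Rmax 1 (2 * (9 + eps) / r) in
  forall c : R, (0 < c)%R ->
  exists K1 : R, exists N : nat, forall n : nat, (N <= n)%N ->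
  let p2 := ((1 - eps) / INR n)%R in
  let p3 := (r / (INR n * ln (INR n)))%R in
  forall (sel : {set 'I_n} -> {set 'I_n} -> 'I_n), valid_sel sel ->
  forall (v : 'I_n) (T : nat), (INR T <= K0 * ln (INR n))%R ->
  (hg_prob p2 p3
     (fun G => let st := prop_state G sel v T in
               Rlt_dec (K1 * ln (INR n)) (INR (#|st.1| + #|st.2|)))
   < Rpower (INR n) (- c))%R.
Proof.
move=> [e0 e1] r0 K0 c c0.
have K01 : (1 <= K0)%R by apply: Rmax_l.
set al := (K0 * (1 - eps) + K0 * K0 * r)%R.
have al0 : (0 <= al)%R.
  rewrite /al; apply: Rplus_le_le_0_compat; first by apply: Rmult_le_pos; lra.
  by apply: Rmult_le_pos; [apply: Rmult_le_pos|]; lra.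
set be := Rmax (Rmax (2 * exp 1 * exp 1 * al) (c + 1)) K0.
have be1 : (2 * exp 1 * exp 1 * al <= be)%R.
  by apply: Rle_trans (Rmax_l _ _) (Rmax_l _ _).
have be2 : (c + 1 <= be)%R by apply: Rle_trans (Rmax_r _ _) (Rmax_l _ _).
have be3 : (K0 <= be)%R by apply: Rmax_r.
exists (be + 2)%R, (Z.to_nat (up r) + 3)%N.
move=> n Hn p2 p3 sel Hsel v T HT.
have ur : (r < IZR (up r))%R by have [h _] := archimed r; lra.
have hz : (0 <= up r)%Z by apply: le_IZR; lra.
have x3 : (IZR (up r) + 3 <= INR n)%R.
  have := le_INR _ _ (leP Hn); rewrite plus_INR INR_IZR_INZ Znat.Z2Nat.id //.
  by rewrite (_ : INR 3 = 3%R) //; simpl; lra.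
set x := INR n in x3 HT *.
set L := ln x in HT *.
have x0 : (0 < x)%R by lra.
have L1 : (1 <= L)%R.
  apply: Rnot_lt_le => h.
  have := exp_increasing _ _ h; rewrite /L exp_ln //.
  have := exp_le_3; lra.
have L0 : (0 < L)%R by lra.
have hp2 : (0 <= p2 <= 1)%R.
  rewrite /p2 -/x; split; first by apply: Rmult_le_pos; [lra|apply: Rlt_le; apply: Rinv_0_lt_compat].
  apply: (Rmult_le_reg_r x) => //; rewrite /Rdiv Rmult_assoc Rinv_l; lra.
have xL : (x <= x * L)%R by have := Rmult_le_compat_l x _ _ (Rlt_le _ _ x0) L1; lra.
have hp3 : (0 <= p3 <= 1)%R.
  have xL0 : (0 < x * L)%R by apply: Rmult_lt_0_compat.
  rewrite /p3 -/x -/L; split; first by apply: Rmult_le_pos; [lra|apply: Rlt_le; apply: Rinv_0_lt_compat].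
  apply: (Rmult_le_reg_r (x * L)) => //; rewrite /Rdiv Rmult_assoc Rinv_l; lra.
have [m [hm1 hm2]] : exists m : nat, (be * L < INR m <= be * L + 1)%R.
  by apply: nat_approx; apply: Rmult_le_pos; lra.
have Tm : (T <= m)%N.
  apply: ltnW; apply/ltP; apply: INR_lt.
  have := Rmult_le_compat_r L _ _ (Rlt_le _ _ L0) be3; lra.
have t0 := pos_INR T.
apply: Rle_lt_trans (hg_prob_mono hp2 hp3 (F := fun G =>
   leq m.+1 (#|(prop_state G sel v T).1| + #|(prop_state G sel v T).2|)) _) _.
  move=> G /=; case: Rlt_dec => //= h _.
  apply/ltP; apply: INR_lt; apply: Rle_lt_trans h.
  rewrite (_ : ((be + 2) * L = be * L + 2 * L)%R); [lra|ring].
apply: Rle_lt_trans (main_bound hp2 hp3 Hsel v Tm) _.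
rewrite /Rpower -/x -/L (_ : (- c * L = - (c * L))%R); last ring.
apply: (final_num (x := x) (L := L) (al := al) (be := be)) => //.
- split; first exact: q_ge0.
  rewrite /q /p2 /p3 -/x -/L.
  have -> : (INR T * ((1 - eps) / x) + INR T * INR T * (r / (x * L)) =
      (INR T * (1 - eps) + INR T * INR T * r / L) / x)%R by field; lra.
  apply: Rmult_le_compat_r; first by apply: Rlt_le; apply: Rinv_0_lt_compat.
  rewrite /al.
  have h1 : (INR T * (1 - eps) <= K0 * L * (1 - eps))%R.
    by apply: Rmult_le_compat_r; lra.
  have h2 : (INR T * INR T <= K0 * L * (K0 * L))%R by apply: Rmult_le_compat.
  have h3 : (INR T * INR T * r / L <= K0 * K0 * r * L)%R.
    apply: (Rmult_le_reg_r L) => //.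
    have -> : (INR T * INR T * r / L * L = INR T * INR T * r)%R by field; lra.
    have := Rmult_le_compat_r r _ _ (Rlt_le _ _ r0) h2; nra.
  nra.
- exact: pos_INR.
- exact: binom_le.
Qed.
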